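(* Consider the unbounded variant of the reserve price problem with $n=2$ samples, $d=2$ features and $X=\mathbb{R}^2$: $\max_{\beta\in\mathbb{R}^2}\frac12\sum_{i=1}^2 r(w^i\cdot\beta;b_i^{(1)},b_i^{(2)})$. There exists a sequence of such instances in which all problem data ($w^1,w^2\in\mathbb{R}^2$ with $\|w^1\|_2,\|w^2\|_2\le 1$, and bids $b_i^{(1)},b_i^{(2)}\in[0,1]$) are bounded in magnitude by one, each instance has a unique optimal solution $\beta^*$, and $\|\beta^*\|$ grows arbitrarily large along the sequence.
   Context: The reward function is $r(v;b^{(1)},b^{(2)})=b^{(2)}$ if $v\le b^{(2)}$, $=v$ if $b^{(2)}<v\le b^{(1)}$, and $=0$ if $v>b^{(1)}$, for bids $b^{(1)}\ge b^{(2)}\ge0$. *)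

(* Defs.v *)
From Stdlib Require Import Reals.
Open Scope R_scope.

(* Reward r(v; b1, b2) for bids b1 >= b2 >= 0. *)
Definition reward (v b1 b2 : R) : R :=
  if Rle_dec v b2 then b2 else if Rle_dec v b1 then v else 0.

Definition dot2 (x y : R * R) : R := fst x * fst y + snd x * snd y.

Definition norm2 (x : R * R) : R := sqrt (dot2 x x).

Definition objective (w1 w2 : R * R) (b11 b12 b21 b22 : R) (beta : R * R) : R :=
  / 2 * (reward (dot2 w1 beta) b11 b12 + reward (dot2 w2 beta) b21 b22).

Definition is_optimal (w1 w2 : R * R) (b11 b12 b21 b22 : R) (beta : R * R) : Prop :=
  forall gamma : R * R,
    objective w1 w2 b11 b12 b21 b22 gamma <= objective w1 w2 b11 b12 b21 b22 beta.

(* Main.v *)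
Require Import Defs.
From Stdlib Require Import Reals Lra.
Open Scope R_scope.

Lemma rew_le1 v : reward v 1 0 <= 1.
Proof. unfold reward; destruct (Rle_dec v 0); [lra|]; destruct (Rle_dec v 1); lra. Qed.

Lemma rew_eq1 v : 1 <= reward v 1 0 -> v = 1.
Proof. unfold reward; destruct (Rle_dec v 0); [lra|]; destruct (Rle_dec v 1); lra. Qed.

Lemma rew_at1 : reward 1 1 0 = 1.
Proof. unfold reward; destruct (Rle_dec 1 0); [lra|]; destruct (Rle_dec 1 1); lra. Qed.

Theorem proposition4 :
  forall M : R,
  exists (w1 w2 : R * R) (b11 b12 b21 b22 : R) (beta_star : R * R),
    norm2 w1 <= 1 /\ norm2 w2 <= 1 /\
    0 <= b12 <= b11 /\ b11 <= 1 /\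
    0 <= b22 <= b21 /\ b21 <= 1 /\
    is_optimal w1 w2 b11 b12 b21 b22 beta_star /\
    (forall beta : R * R, is_optimal w1 w2 b11 b12 b21 b22 beta -> beta = beta_star) /\
    M < norm2 beta_star.
Proof.
  intro M.
  set (e := / (Rabs M + 1)).
  assert (HA : 0 <= Rabs M) by apply Rabs_pos.
  assert (He : 0 < e) by (unfold e; apply Rinv_0_lt_compat; lra).
  assert (He1 : e <= 1).
  { unfold e. rewrite <- Rinv_1. apply Rinv_le_contravar; lra. }
  exists (1,0), (0,e), 1, 0, 1, 0, (1, /e).
  assert (Hobj : forall g, objective (1,0) (0,e) 1 0 1 0 g <= 1).
  { intro g. unfold objective. pose proof (rew_le1 (dot2 (1,0) g)).
    pose proof (rew_le1 (dot2 (0,e) g)). lra. }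
  assert (Hstar : objective (1,0) (0,e) 1 0 1 0 (1, /e) = 1).
  { unfold objective, dot2; simpl.
    replace (1*1+0*/e) with 1 by ring.
    replace (0*1+e*/e) with 1 by (field; lra).
    rewrite rew_at1. lra. }
  repeat split; try lra.
  - unfold norm2, dot2; simpl. replace (1*1+0*0) with 1 by ring. rewrite sqrt_1; lra.
  - unfold norm2, dot2; simpl. replace (0*0+e*e) with (e*e) by ring.
    rewrite sqrt_square; lra.
  - intro g. rewrite Hstar. apply Hobj.
  - intros [b1 b2] Hb. specialize (Hb (1, /e)). rewrite Hstar in Hb.
    unfold objective in Hb. unfold dot2 in Hb; simpl in Hb.
    pose proof (rew_le1 (1*b1+0*b2)). pose proof (rew_le1 (0*b1+e*b2)).
    assert (H1 : 1*b1+0*b2 = 1) by (apply rew_eq1; lra).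
    assert (H2 : 0*b1+e*b2 = 1) by (apply rew_eq1; lra).
    f_equal; [lra|].
    apply (Rmult_eq_reg_l e); [|lra]. rewrite Rinv_r; lra.
  - unfold norm2, dot2; simpl.
    assert (Hi : /e = Rabs M + 1) by (unfold e; rewrite Rinv_inv; reflexivity).
    apply Rlt_le_trans with (/e).
    + rewrite Hi. pose proof (Rle_abs M). lra.
    + rewrite <- (sqrt_square (/e)) at 1 by lra.
      apply sqrt_le_1_alt. lra.
Qed.
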